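(* Let $X$ be a set of $n$ points with similarity function $S$, suppose the target clustering $\mathcal{C}^{\ast}=\{C^{\ast}_1,\dots,C^{\ast}_k\}$ satisfies stability with respect to $S$, let $\eta>0.5$, and suppose the initial clustering has clustering error $\gamma$, where $\gamma$ is any natural clustering error. Then in the $\eta$-merge model, the interactive algorithm using the global split procedure and the global $\eta$-merge procedure (described below) requires at most $O(\gamma+k)\log_{\frac{1}{1-\eta}} n$ edit requests to find the target clustering.
   Context: For nonempty $A,A'\subseteq X$, $S(A,A')$ is the average of $S(x,y)$ over $x\in A,y\in A'$. $\mathcal{C}^{\ast}$ satisfies stability w.r.t. $S$ if for all $i\neq j$, every nonempty proper $A\subset C^{\ast}_i$ and nonempty $A'\subseteq C^{\ast}_j$: $S(A,C^{\ast}_i\setminus A)>S(A,A')$. A natural clustering error is a function $\gamma$ assigning to each clustering $\mathcal{C}$ of $X$ a nonnegative integer $\gamma(\mathcal{C},\mathcal{C}^{\ast})$ such that for every clustering $\mathcal{C}$: (1) if a cluster $C_i\in\mathcal{C}$ contains points of $C^{\ast}_j$ and of some other target cluster, replacing $C_i$ by $C_i\cap C^{\ast}_j$ and $C_i\setminus C^{\ast}_j$ strictly decreases $\gamma$; (2) if two distinct clusters of $\mathcal{C}$ contain only points from the same target cluster, replacing them by their union strictly decreases $\gamma$. Average-linkage tree $T_{glob}$: leaves are singletons; repeatedly merge the two current nodes $N_1,N_2$ with largest $S(N_1,N_2)$ (ties arbitrary) into parent $N_1\cup N_2$ until the root $X$ remains. Process ($\eta$-merge model): start from the initial clustering, all clusters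 labelled ''impure''. The oracle issues split$(C_i)$ (only if $C_i$ has points from two or more target clusters) or merge$(C_i,C_j)$ (only if some $C^{\ast}_l$ has $|C_i\cap C^{\ast}_l|\ge\eta|C_i|$ and $|C_j\cap C^{\ast}_l|\ge\eta|C_j|$). Split procedure: with $N$ the deepest node of $T_{glob}$ containing $C_i$ and children $N_1,N_2$, replace $C_i$ by $C_i\cap N_1,C_i\cap N_2$, labelled ''impure''. Merge procedure: $\eta_1=1$ if $C_i$ is ''pure'', else $\eta$; $\eta_2$ likewise; find a maximal-depth node $N$ of $T_{glob}$ with $|N\cap C_i|\ge\eta_1|C_i|$, $|N\cap C_j|\ge\eta_2|C_j|$; replace $C_i,C_j$ by $C_i\setminus N$, $C_j\setminus N$ (labels kept, empty clusters discarded) and add new cluster $N\cap(C_i\cup C_j)$ labelled ''pure''. The bound is on the total number of requests before the current clustering equals $\mathcal{C}^{\ast}$, for any sequence of allowed requests; the $O(\cdot)$ hides an absolute constant. *)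

(* Defs.v *)
From HB Require Import structures.
From mathcomp Require Import all_boot all_order all_algebra.
From mathcomp Require Import reals exp.
Set Implicit Arguments. Unset Strict Implicit. Unset Printing Implicit Defensive.
Import Order.TTheory GRing.Theory Num.Theory.
Local Open Scope ring_scope.

Section Clustering.
Variables (R : realType) (T : finType).

Definition clustering (P : {set {set T}}) : bool := partition P [set: T].

Definition avgS (S : T -> T -> R) (A B : {set T}) : R :=
  (\sum_(x in A) \sum_(y in B) S x y) / (#|A| * #|B|)%:R.

Definition stable (S : T -> T -> R) (Cs : {set {set T}}) : Prop :=
  forall Ci Cj, Ci \in Cs -> Cj \in Cs -> Ci != Cj ->
  forall A A' : {set T}, A != set0 -> A \proper Ci -> A' != set0 -> A' \subset Cj ->
    avgS S A (Ci :\: A) > avgS S A A'.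

Definition natural_error (Cs : {set {set T}}) (gamma : {set {set T}} -> nat) : Prop :=
  (forall P Ci Cj, clustering P -> Ci \in P -> Cj \in Cs ->
     Ci :&: Cj != set0 -> ~~ (Ci \subset Cj) ->
     (gamma ((P :\ Ci) :|: [set Ci :&: Cj; Ci :\: Cj]) < gamma P)%N) /\
  (forall P C1 C2, clustering P -> C1 \in P -> C2 \in P -> C1 != C2 ->
     (exists2 Cl, Cl \in Cs & (C1 \subset Cl) && (C2 \subset Cl)) ->
     (gamma ((P :\ C1 :\ C2) :|: [set C1 :|: C2]) < gamma P)%N).

Definition merge_nodes (P : {set {set T}}) (N1 N2 : {set T}) : {set {set T}} :=
  (N1 :|: N2) |: ((P :\ N1) :\ N2).

(* al_run S P s : starting from the current nodes P, the merges listed in s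
   are performed by average linkage (each time a pair of distinct current
   nodes of maximum average similarity; ties arbitrary) until only the root
   X remains. *)
Inductive al_run (S : T -> T -> R) : {set {set T}} -> seq ({set T} * {set T}) -> Prop :=
| al_done (P : {set {set T}}) : P = [set [set: T]] -> al_run S P [::]
| al_step (P : {set {set T}}) (N1 N2 : {set T}) (s : seq ({set T} * {set T})) :
    N1 \in P -> N2 \in P -> N1 != N2 ->
    (forall M1 M2, M1 \in P -> M2 \in P -> M1 != M2 -> avgS S M1 M2 <= avgS S N1 N2) ->
    al_run S (merge_nodes P N1 N2) s -> al_run S P ((N1, N2) :: s).

Definition singletons : {set {set T}} := [set [set x] | x : T].

Definition avg_linkage_tree (S : T -> T -> R) (s : seq ({set T} * {set T})) : Prop :=
  al_run S singletons s.

Definition tnodes (s : seq ({set T} * {set T})) : {set {set T}} :=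
  singletons :|: [set p.1 :|: p.2 | p in [set p | p \in s]].

(* depth of a node = number of its strict ancestors (strict supersets among
   the nodes of the hierarchical tree) *)
Definition tdepth (s : seq ({set T} * {set T})) (N : {set T}) : nat :=
  #|[set M in tnodes s | N \proper M]|.

Inductive request := Split of {set T} | Merge of {set T} & {set T}.

(* state: current clustering and the set of clusters labelled "pure"
   (all others are labelled "impure") *)
Definition state := ({set {set T}} * {set {set T}})%type.

Definition impure_wrt (Cs : {set {set T}}) (C : {set T}) : bool :=
  (1 < #|[set D in Cs | D :&: C != set0]|)%N.

Definition allowed (eta : R) (Cs : {set {set T}}) (st : state) (r : request) : Prop :=
  match r with
  | Split C => C \in st.1 /\ impure_wrt Cs C
  | Merge Ci Cj => [/\ Ci \in st.1, Cj \in st.1, Ci != Cj &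
      (exists2 Cl, Cl \in Cs &
        (eta * #|Ci|%:R <= #|Ci :&: Cl|%:R) /\ (eta * #|Cj|%:R <= #|Cj :&: Cl|%:R))]
  end.

Definition eta_of (eta : R) (st : state) (C : {set T}) : R :=
  if C \in st.2 then 1 else eta.

Definition step (s : seq ({set T} * {set T})) (eta : R)
    (st : state) (r : request) (st' : state) : Prop :=
  match r with
  | Split C =>
      exists N N1 N2,
        [/\ N \in tnodes s, C \subset N,
            (forall M, M \in tnodes s -> C \subset M -> (tdepth s M <= tdepth s N)%N),
            ((N1, N2) \in s /\ N1 :|: N2 = N) &
            st' = ((st.1 :\ C) :|: [set C :&: N1; C :&: N2],
                   (st.2 :\ C) :\: [set C :&: N1; C :&: N2])]
  | Merge Ci Cj =>
      let e1 := eta_of eta st Ci in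
      let e2 := eta_of eta st Cj in
      let good N := (e1 * #|Ci|%:R <= #|N :&: Ci|%:R) /\ (e2 * #|Cj|%:R <= #|N :&: Cj|%:R) in
      exists N,
        [/\ N \in tnodes s, good N,
            (forall M, M \in tnodes s -> good M -> (tdepth s M <= tdepth s N)%N) &
            (let newC := N :&: (Ci :|: Cj) in
            let P' := ((st.1 :\ Ci :\ Cj) :|: ([set Ci :\: N; Cj :\: N] :\ set0))
                        :|: [set newC] in
            let Pu' := P' :&: ((st.2 :\ Ci :\ Cj)
                        :|: (if Ci \in st.2 then [set Ci :\: N] else set0)
                        :|: (if Cj \in st.2 then [set Cj :\: N] else set0)
                        :|: [set newC]) in
            st' = (P', Pu'))]
  end.

Fixpoint valid_run (s : seq ({set T} * {set T})) (eta : R) (Cs : {set {set T}})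
    (st : state) (rs : seq (request * state)) : Prop :=
  match rs with
  | [::] => True
  | (r, st') :: rs' =>
      [/\ st.1 != Cs, allowed eta Cs st r, step s eta st r st' &
          valid_run s eta Cs st' rs']
  end.

End Clustering.

(* Main.v *)
Require Import Defs.
From HB Require Import structures.
From mathcomp Require Import all_boot all_order all_algebra.
From mathcomp Require Import reals exp.
From mathcomp Require Import zify ring lra.
Import Order.TTheory GRing.Theory Num.Theory.
Local Open Scope ring_scope.
Set Implicit Arguments. Unset Strict Implicit. Unset Printing Implicit Defensive.

Section Avg.
Variables (R : realType) (T : finType) (S : T -> T -> R).

Definition num (A B : {set T}) : R := \sum_(x in A) \sum_(y in B) S x y.

Lemma sum_cover (f : T -> R) (B : {set T}) (Q : {set {set T}}) :
  trivIset Q -> B \subset cover Q ->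
  \sum_(y in B) f y = \sum_(M in Q) \sum_(y in M :&: B) f y.
Proof.
move=> tQ sB.
have -> : \sum_(y in B) f y = \sum_(y in cover Q) (if y \in B then f y else 0).
  rewrite -big_mkcondr /=; apply: eq_bigl => y.
  by case yB: (y \in B); rewrite ?andbF ?andbT // (subsetP sB).
rewrite (big_trivIset _ tQ) /=; apply: eq_bigr => M _.
rewrite -big_mkcondr /=; apply: eq_bigl => y; by rewrite inE.
Qed.

Lemma num_cover (A B : {set T}) (Q : {set {set T}}) :
  trivIset Q -> B \subset cover Q ->
  num A B = \sum_(M in Q) num A (M :&: B).
Proof.
move=> tQ sB; rewrite /num.
under eq_bigr => x _ do rewrite (sum_cover _ tQ sB).
by rewrite exchange_big.
Qed.

Lemma card_cover (B : {set T}) (Q : {set {set T}}) :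
  trivIset Q -> B \subset cover Q ->
  (#|B|%:R : R) = \sum_(M in Q) #|M :&: B|%:R.
Proof.
move=> tQ sB; rewrite -sumr_const (sum_cover _ tQ sB).
by apply: eq_bigr => M _; rewrite sumr_const.
Qed.

Lemma num0 (A : {set T}) : num A set0 = 0.
Proof. by rewrite /num; apply: big1 => x _; rewrite big_set0. Qed.

Lemma avg_ltE (A B : {set T}) (v : R) : A != set0 -> B != set0 ->
  (avgS S A B < v) = (num A B < v * (#|A| * #|B|)%:R).
Proof.
move=> A0 B0; rewrite /avgS ltr_pdivrMr // ltr0n muln_gt0 !card_gt0 A0 B0 //.
Qed.

Lemma avg_leE (A B : {set T}) (v : R) : A != set0 -> B != set0 ->
  (v <= avgS S A B) = (v * (#|A| * #|B|)%:R <= num A B).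
Proof.
move=> A0 B0; rewrite /avgS ler_pdivlMr // ltr0n muln_gt0 !card_gt0 A0 B0 //.
Qed.

Lemma avg_split (A B : {set T}) (Q : {set {set T}}) (v : R) : trivIset Q -> B \subset cover Q ->
  A != set0 -> B != set0 ->
  (forall M, M \in Q -> M :&: B != set0 -> avgS S A (M :&: B) < v) ->
  avgS S A B < v.
Proof.
move=> tQ sB A0 B0 H; rewrite avg_ltE // (num_cover _ tQ sB).
rewrite natrM (card_cover tQ sB) mulr_sumr mulr_sumr.
have [y yB] := set0Pn _ B0.
have := subsetP sB y yB; case/bigcupP => M0 M0Q yM0.
have M0B : M0 :&: B != set0 by apply/set0Pn; exists y; rewrite inE yM0.
rewrite (bigD1 M0) //= [X in _ < X](bigD1 M0) //=.
apply: ltr_leD; first by rewrite -natrM -avg_ltE //; exact: H.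
apply: ler_sum => M /andP [MQ _].
have [MB0|MB0] := eqVneq (M :&: B) set0.
  by rewrite MB0 num0 cards0 mulr0 mulr0.
by rewrite -natrM ltW // -avg_ltE //; exact: H.
Qed.

Lemma avgSC (Ssym : forall x y, S x y = S y x) A B : avgS S A B = avgS S B A.
Proof.
rewrite /avgS mulnC; congr (_ / _); rewrite exchange_big /=.
by apply: eq_bigr => x _; apply: eq_bigr => y _; rewrite Ssym.
Qed.

End Avg.

Section Tree.
Variables (R : realType) (T : finType) (S : T -> T -> R) (Cs : {set {set T}}).
Hypothesis Ssym : forall x y, S x y = S y x.
Hypothesis Cspart : clustering Cs.
Hypothesis Cstab : stable S Cs.

Definition good (M : {set T}) := forall D, D \in Cs ->
  [\/ M \subset D, D \subset M | M :&: D = set0].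

Lemma meetP (A B : {set T}) : reflect (exists2 x, x \in A & x \in B) (A :&: B != set0).
Proof.
apply: (iffP (set0Pn _)) => [[x]|[x xA xB]]; first by rewrite inE => /andP[]; exists x.
by exists x; rewrite inE xA.
Qed.

Lemma triv_meet (P : {set {set T}}) A B : trivIset P -> A \in P -> B \in P ->
  A :&: B != set0 -> A = B.
Proof.
move=> /trivIsetP tP AP BP AB; apply/eqP; apply: contraNT AB => nAB.
by rewrite setI_eq0 tP.
Qed.

Lemma part_triv (P : {set {set T}}) D : partition P D -> trivIset P.
Proof. by case/and3P. Qed.
Lemma part_n0 (P : {set {set T}}) D M : partition P D -> M \in P -> M != set0.
Proof. by case/and3P=> _ _ H MP; apply: contraNneq H => <-. Qed.
Lemma part_cover (P : {set {set T}}) : partition P setT -> forall x, exists2 M, M \in P & x \in M.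
Proof.
case/and3P => /eqP cP _ _ x; have : x \in cover P by rewrite cP inE.
by case/bigcupP => M MP xM; exists M.
Qed.

Lemma Cs_n0 D : D \in Cs -> D != set0.
Proof. exact: part_n0 Cspart. Qed.

Lemma merge_contra (P : {set {set T}}) N1 N2 D :
  partition P setT -> (forall M, M \in P -> good M) ->
  N1 \in P -> N2 \in P -> N1 != N2 ->
  (forall M1 M2, M1 \in P -> M2 \in P -> M1 != M2 -> avgS S M1 M2 <= avgS S N1 N2) ->
  D \in Cs -> N1 \proper D -> N2 :&: D = set0 -> False.
Proof.
move=> Ppart Pgood N1P N2P N12 Hmax DCs N1D N2D.
have tP := part_triv Ppart.
have N10 := part_n0 Ppart N1P; have N20 := part_n0 Ppart N2P.
set B := D :\: N1.
have B0 : B != set0.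
  case/properP: N1D => _ [x xD xN1]; apply/set0Pn; exists x; by rewrite inE xD xN1.
have st1 : avgS S N1 N2 < avgS S N1 B.
  apply: (avg_split (Q := Cs)) => //; first exact: part_triv Cspart.
    by case/and3P: Cspart => /eqP -> _ _; exact: subsetT.
  move=> M MCs MN2.
  have MD : D != M.
    apply: contraNneq MN2 => <-; by rewrite setIC N2D.
  apply: (Cstab DCs MCs MD) => //; by rewrite setIC subsetIr.
have [M /and3P [MP MB HM]] :
   exists M, [&& M \in P, M :&: B != set0 & avgS S N1 B <= avgS S N1 (M :&: B)].
  case: (boolP [exists M, [&& M \in P, M :&: B != set0 & avgS S N1 B <= avgS S N1 (M :&: B)]]) => [/existsP //|Hn].
  exfalso.
  have : avgS S N1 B < avgS S N1 B.
    apply: (avg_split (Q := P)) => //.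
      by case/and3P: Ppart => /eqP -> _ _; exact: subsetT.
    move=> M MP MB; rewrite ltNge; apply/negP => HM; apply: (negP Hn).
    by apply/existsP; exists M; rewrite MP MB HM.
  by rewrite ltxx.
have MN1 : M != N1.
  apply: contraNneq MB => ->; apply/eqP/setP => x; rewrite !inE.
  by case: (x \in N1); rewrite ?andbF.
have MN1d : M :&: N1 = set0.
  by apply/eqP; apply: contraNT MN1 => H; apply/eqP; apply: (triv_meet tP).
have MsubB : M \subset B.
  have MDm : M :&: D != set0.
    case/meetP: MB => x xM; rewrite inE => /andP [_ xD]; apply/meetP; by exists x.
  case: (Pgood M MP D DCs) => [MD|DM|MD0]; last by rewrite MD0 eqxx in MDm.
    apply/subsetP => x xM; rewrite inE (subsetP MD) // andbT.
    apply/negP => xN1; have : x \in M :&: N1 by rewrite inE xM.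
    by rewrite MN1d inE.
  have [x xN1] := set0Pn _ N10.
  have : x \in M :&: N1 by rewrite inE xN1 (subsetP DM) // (subsetP (proper_sub N1D)).
  by rewrite MN1d inE.
have MBe : M :&: B = M by apply/setIidPl.
rewrite MBe in HM.
have H2 : avgS S N1 M <= avgS S N1 N2 by apply: Hmax => //; rewrite eq_sym.
have : avgS S N1 B < avgS S N1 B.
  by apply: (le_lt_trans HM); apply: (le_lt_trans H2).
by rewrite ltxx.
Qed.

Lemma merge_good (P : {set {set T}}) N1 N2 :
  partition P setT -> (forall M, M \in P -> good M) ->
  N1 \in P -> N2 \in P -> N1 != N2 ->
  (forall M1 M2, M1 \in P -> M2 \in P -> M1 != M2 -> avgS S M1 M2 <= avgS S N1 N2) ->
  good (N1 :|: N2).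
Proof.
move=> Ppart Pgood N1P N2P N12 Hmax D DCs.
have Hmax' : forall M1 M2, M1 \in P -> M2 \in P -> M1 != M2 -> avgS S M1 M2 <= avgS S N2 N1.
  by move=> *; rewrite [X in _ <= X](avgSC Ssym); apply: Hmax.
have N21 : N2 != N1 by rewrite eq_sym.
case: (Pgood N1 N1P D DCs) => [h1|h1|h1].
- case: (Pgood N2 N2P D DCs) => [h2|h2|h2].
  + by apply: Or31; rewrite subUset h1 h2.
  + by apply: Or32; apply: subset_trans h2 (subsetUr _ _).
  + have [DN1|nDN1] := boolP (D \subset N1).
      by apply: Or32; apply: subset_trans DN1 (subsetUl _ _).
    exfalso; apply: (merge_contra Ppart Pgood N1P N2P N12 Hmax DCs _ h2).
    by rewrite properE h1.
- by apply: Or32; apply: subset_trans h1 (subsetUl _ _).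
- case: (Pgood N2 N2P D DCs) => [h2|h2|h2].
  + have [DN2|nDN2] := boolP (D \subset N2).
      by apply: Or32; apply: subset_trans DN2 (subsetUr _ _).
    exfalso; apply: (merge_contra Ppart Pgood N2P N1P N21 Hmax' DCs _ h1).
    by rewrite properE h2.
  + by apply: Or32; apply: subset_trans h2 (subsetUr _ _).
  + by apply: Or33; rewrite setIUl h1 h2 setU0.
Qed.


Lemma triv0 (P : {set {set T}}) A B : trivIset P -> A \in P -> B \in P -> A != B ->
  A :&: B = set0.
Proof. by move=> /trivIsetP tP AP BP AB; apply/eqP; rewrite setI_eq0 tP. Qed.

Lemma merge_nodesP (P : {set {set T}}) N1 N2 M :
  M \in merge_nodes P N1 N2 = (M == N1 :|: N2) || [&& M != N2, M != N1 & M \in P].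
Proof. by rewrite /merge_nodes !inE. Qed.

Lemma merge_part (P : {set {set T}}) N1 N2 : partition P setT -> N1 \in P -> N2 \in P ->
  N1 != N2 -> partition (merge_nodes P N1 N2) setT.
Proof.
move=> Ppart N1P N2P N12; have tP := part_triv Ppart.
apply/and3P; split.
- apply/eqP/setP => x; rewrite inE; apply/bigcupP.
  have [M MP xM] := part_cover Ppart x.
  case: (eqVneq M N1) => [eM|MN1].
    by exists (N1 :|: N2); rewrite ?merge_nodesP ?eqxx // inE -eM xM.
  case: (eqVneq M N2) => [eM|MN2].
    by exists (N1 :|: N2); rewrite ?merge_nodesP ?eqxx // inE -eM xM orbT.
  by exists M; rewrite // merge_nodesP MN1 MN2 MP orbT.
- apply/trivIsetP => A B; rewrite !merge_nodesP.
  move=> /orP[/eqP->|/and3P[AN2 AN1 AP]] /orP[/eqP->|/and3P[BN2 BN1 BP]] AB;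
    rewrite -setI_eq0 ?eqxx // ?setIUl ?setIUr.
  + by rewrite eqxx in AB.
  + by rewrite (triv0 tP N1P BP) 1?eq_sym // (triv0 tP N2P BP) 1?eq_sym // setU0.
  + by rewrite (triv0 tP AP N1P) // (triv0 tP AP N2P) // setU0.
  + by rewrite (triv0 tP AP BP).
- rewrite merge_nodesP negb_or; apply/andP; split.
    have := part_n0 Ppart N1P; apply: contraNN => /eqP e.
    by rewrite -subset0 e subsetUl.
  by rewrite !negb_and; case/and3P: Ppart => _ _ ->; rewrite !orbT.
Qed.

Lemma single_part : partition (singletons T) setT.
Proof.
apply/and3P; split.
- apply/eqP/setP => x; rewrite inE; apply/bigcupP; exists [set x]; last by rewrite inE.
  by apply/imsetP; exists x.
- apply/trivIsetP => A B /imsetP [x _ ->] /imsetP [y _ ->] xy.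
  rewrite -setI_eq0; apply/eqP/setP => z; rewrite !inE.
  apply/negP => /andP [/eqP zx /eqP zy]; by move: xy; rewrite -zx -zy eqxx.
- apply/negP => /imsetP [x _ e]; have : x \in (set0 : {set T}) by rewrite e inE.
  by rewrite inE.
Qed.

Lemma single_good M : M \in singletons T -> good M.
Proof.
move=> /imsetP [x _ ->] D _.
case xD: (x \in D).
  by apply: Or31; rewrite sub1set.
apply: Or33; apply/setP => z; rewrite !inE; apply/negP => /andP [/eqP -> ]; by rewrite xD.
Qed.

Definition InN (P : {set {set T}}) (s : seq ({set T} * {set T})) M :=
  M \in P \/ exists2 p, p \in s & M = p.1 :|: p.2.

Lemma run_props P s : al_run S P s -> partition P setT -> (forall M, M \in P -> good M) ->
  (forall p, p \in s -> [/\ good (p.1 :|: p.2), InN P s p.1, InN P s p.2,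
                            (p.1 != set0) && (p.2 != set0) & p.1 :&: p.2 = set0])
  /\ (forall D, D \in Cs -> (forall M, M \in P -> ~~ (D \proper M)) -> InN P s D).
Proof.
elim => {P s} [P HP | P N1 N2 s N1P N2P N12 Hmax Hrun IH] Ppart Pgood.
  split => // D DCs H; left; rewrite HP inE.
  have := H setT; rewrite HP inE eqxx properEneq subsetT andbT => /(_ isT).
  by rewrite negbK.
have tP := part_triv Ppart.
have P'part := merge_part Ppart N1P N2P N12.
have Ug := merge_good Ppart Pgood N1P N2P N12 Hmax.
have P'good : forall M, M \in merge_nodes P N1 N2 -> good M.
  by move=> M; rewrite merge_nodesP => /orP[/eqP->//|/and3P[_ _ MP]]; exact: Pgood.
have [IHa IHb] := IH P'part P'good.
have weak : forall M, InN (merge_nodes P N1 N2) s M -> InN P ((N1, N2) :: s) M.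
  move=> M [|[p ps ->]]; last by right; exists p; rewrite // in_cons ps orbT.
  rewrite merge_nodesP => /orP[/eqP->|/and3P[_ _ MP]]; last by left.
  by right; exists (N1, N2); rewrite ?mem_head.
split.
  move=> p; rewrite in_cons => /orP[/eqP->|ps] /=.
    split => //; try by left.
      by rewrite (part_n0 Ppart N1P) (part_n0 Ppart N2P).
    exact: triv0 tP N1P N2P N12.
  by have [g h1 h2 h3 h4] := IHa p ps; split => //; apply: weak.
move=> D DCs H.
have [DP|DP] := boolP (D \in P); first by left.
apply: weak; apply: IHb => // M; rewrite merge_nodesP => /orP[/eqP->|/and3P[_ _ MP]];
  last exact: H.
have aux : forall N, N \in P -> D :&: N != set0 -> N \subset D.
  move=> N NP DN; case: (Pgood N NP D DCs) => [//|NDs|N0].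
    have := H N NP; rewrite properEneq NDs andbT negbK => /eqP e.
    by rewrite e NP in DP.
  by rewrite setIC N0 eqxx in DN.
apply/negP => DU.
have DsU := proper_sub DU.
have [D1|D1] := eqVneq (D :&: N1) set0.
  have DN2 : D \subset N2.
    apply/subsetP => x xD; have := subsetP DsU x xD; rewrite inE => /orP[xN1|//].
    have : x \in D :&: N1 by rewrite inE xD xN1.
    by rewrite D1 inE.
  have : N2 \subset D.
    apply: aux => //; apply/set0Pn; have [x xD] := set0Pn _ (Cs_n0 DCs).
    by exists x; rewrite inE xD (subsetP DN2).
  move=> N2D; have e : D = N2 by apply/eqP; rewrite eqEsubset DN2 N2D.
  by rewrite e N2P in DP.
have [D2|D2] := eqVneq (D :&: N2) set0.
  have DN1 : D \subset N1.
    apply/subsetP => x xD; have := subsetP DsU x xD; rewrite inE => /orP[//|xN2].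
    have : x \in D :&: N2 by rewrite inE xD xN2.
    by rewrite D2 inE.
  have : N1 \subset D by apply: aux.
  move=> N1D; have e : D = N1 by apply/eqP; rewrite eqEsubset DN1 N1D.
  by rewrite e N1P in DP.
have : N1 :|: N2 \subset D by rewrite subUset !aux.
by move=> UD; move: DU; rewrite properE UD andbF.
Qed.

End Tree.

Section TreeTop.
Variables (R : realType) (T : finType) (S : T -> T -> R) (Cs : {set {set T}}).
Hypothesis Ssym : forall x y, S x y = S y x.
Hypothesis Cspart : clustering Cs.
Hypothesis Cstab : stable S Cs.
Variable s : seq ({set T} * {set T}).
Hypothesis Htree : avg_linkage_tree S s.

Lemma InN_tnodes M : InN (singletons T) s M -> M \in tnodes s.
Proof.
rewrite /tnodes inE; case => [->//|[p ps ->]]; apply/orP; right.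
by apply/imsetP; exists p; rewrite ?inE.
Qed.

Lemma tnodes_InN M : M \in tnodes s -> InN (singletons T) s M.
Proof.
rewrite /tnodes inE => /orP[H|/imsetP[p]]; first by left.
by rewrite inE => ps ->; right; exists p.
Qed.

Let props := run_props Ssym Cspart Cstab Htree (single_part T) (@single_good _ Cs).

Lemma TA M : M \in tnodes s -> good Cs M.
Proof.
move/tnodes_InN => [|[p ps ->]]; first exact: single_good.
by have [h _] := props; have [] := h p ps.
Qed.

Lemma TB D : D \in Cs -> D \in tnodes s.
Proof.
move=> DCs; apply: InN_tnodes; have [_ h] := props; apply: h => // M /imsetP [x _ ->].
apply/negP => /properP [Dx [y /set1P -> xD]].
have [z zD] := set0Pn _ (Cs_n0 Cspart DCs).
by have := subsetP Dx z zD; move/set1P => e; rewrite -e zD in xD.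
Qed.

Lemma TC p : p \in s -> [/\ p.1 \in tnodes s, p.2 \in tnodes s, (p.1 != set0) && (p.2 != set0) &
  p.1 :&: p.2 = set0].
Proof.
move=> ps; have [h _] := props; have [_ h1 h2 h3 h4] := h p ps.
by split => //; apply: InN_tnodes.
Qed.

End TreeTop.

Lemma tdepth_lt (T : finType) (s : seq ({set T} * {set T})) (M N : {set T}) :
  N \in tnodes s -> M \proper N -> (tdepth s N < tdepth s M)%N.
Proof.
move=> Nt MN; rewrite /tdepth; apply: proper_card; apply/properP; split.
  apply/subsetP => X; rewrite !inE => /andP [-> NX] /=; exact: proper_trans MN NX.
exists N; first by rewrite inE Nt.
by rewrite inE negb_and properE subxx /= orbT.
Qed.

Section Sums.
Variables (R : realType) (T : finType).
Implicit Types (A B : {set {set T}}) (f : {set T} -> R).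

Lemma sum_mono A B f : A \subset B -> (forall X, 0 <= f X) ->
  \sum_(X in A) f X <= \sum_(X in B) f X.
Proof.
move=> AB f0; rewrite [X in _ <= X](big_setID A) /=.
have -> : B :&: A = A by apply/setIidPr.
by rewrite lerDl sumr_ge0.
Qed.

Lemma sum_setU_le A B f : (forall X, 0 <= f X) ->
  \sum_(X in A :|: B) f X <= \sum_(X in A :\: B) f X + \sum_(X in B) f X.
Proof.
move=> f0; rewrite (big_setID B) /=.
have -> : (A :|: B) :&: B = B by apply/setIidPr; exact: subsetUr.
have -> : (A :|: B) :\: B = A :\: B.
  by apply/setP => x; rewrite !inE; case: (x \in B); rewrite ?orbF ?orbT.
by rewrite addrC.
Qed.

Lemma sum_setU_le2 A B f : (forall X, 0 <= f X) ->
  \sum_(X in A :|: B) f X <= \sum_(X in A) f X + \sum_(X in B) f X.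
Proof.
move=> f0; apply: (le_trans (sum_setU_le _ _ f0)); rewrite lerD2r.
by apply: sum_mono => //; exact: subsetDl.
Qed.

Lemma sum_pair_le u v f : (forall X, 0 <= f X) ->
  \sum_(X in [set u; v]) f X <= f u + f v.
Proof.
move=> f0; apply: (le_trans (sum_setU_le2 _ _ f0)); by rewrite !big_set1.
Qed.

Lemma sum_pairD0_le u v f : (forall X, 0 <= f X) ->
  \sum_(X in [set u; v] :\ set0) f X <=
  (if u == set0 then 0 else f u) + (if v == set0 then 0 else f v).
Proof.
move=> f0; rewrite setDUl; apply: (le_trans (sum_setU_le2 _ _ f0)).
have H : forall w, \sum_(X in [set w] :\ set0) f X = if w == set0 then 0 else f w.
  move=> w; case: eqP => [->|/eqP wn]; first by rewrite setDv big_set0.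
  have -> : [set w] :\ set0 = [set w].
    by apply/setP => x; rewrite !inE; case: (eqVneq x w) => [->|]; rewrite ?wn ?andbF.
  by rewrite big_set1.
by rewrite !H.
Qed.

End Sums.

Section Targets.
Variables (T : finType) (Cs : {set {set T}}).
Hypothesis Cspart : clustering Cs.

Definition tcount (C : {set T}) := #|[set D in Cs | D :&: C != set0]|.
Definition pureC (C : {set T}) := exists2 D, D \in Cs & C \subset D.

Lemma tcount_sub (A B : {set T}) : A \subset B -> (tcount A <= tcount B)%N.
Proof.
move=> AB; apply: subset_leq_card; apply/subsetP => D; rewrite !inE => /andP [-> DA] /=.
case/meetP: DA => x xD xA; apply/meetP; exists x => //; exact: (subsetP AB).
Qed.

Lemma Cs_meet (D D' : {set T}) : D \in Cs -> D' \in Cs -> D :&: D' != set0 -> D = D'.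
Proof. by move=> *; apply: (triv_meet (part_triv Cspart)). Qed.

Lemma pure_tcount (C : {set T}) : pureC C -> (tcount C <= 1)%N.
Proof.
case=> D0 D0Cs CD0; rewrite -(cards1 D0); apply: subset_leq_card.
apply/subsetP => D; rewrite !inE => /andP [DCs DC]; apply/eqP; apply: Cs_meet => //.
case/meetP: DC => x xD xC; apply/meetP; exists x => //; exact: (subsetP CD0).
Qed.

Lemma in_target x : exists2 D, D \in Cs & x \in D.
Proof. exact: (part_cover Cspart x). Qed.

Lemma tcount_pos (C : {set T}) : C != set0 -> (0 < tcount C)%N.
Proof.
case/set0Pn => x xC; have [D DCs xD] := in_target x.
rewrite card_gt0; apply/set0Pn; exists D; rewrite inE DCs; apply/meetP; by exists x.
Qed.

Lemma tcount_pure (C : {set T}) : C != set0 -> (tcount C <= 1)%N -> pureC C.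
Proof.
move=> C0 Ht; have := tcount_pos C0; rewrite card_gt0 => /set0Pn [D].
rewrite inE => /andP [DCs DC]; exists D => //; apply/subsetP => x xC.
have [D' D'Cs xD'] := in_target x.
have : D' \in [set D in Cs | D :&: C != set0].
  by rewrite inE D'Cs; apply/meetP; exists x.
have : D \in [set D in Cs | D :&: C != set0] by rewrite inE DCs.
move=> h1 h2; case: (eqVneq D D') => [-> //|DD'].
have : (1 < tcount C)%N.
  have e : (2 = #|[set D; D']|)%N by rewrite cards2 DD'.
  rewrite /tcount e; apply: subset_leq_card; apply/subsetP => y.
  by case/set2P => ->.
by rewrite ltnNge Ht.
Qed.

Lemma impure_not_pure (C : {set T}) : (1 < tcount C)%N -> ~ pureC C.
Proof. by move=> H /pure_tcount; rewrite leqNgt H. Qed.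

Lemma sub_pure (A B : {set T}) : A \subset B -> pureC B -> pureC A.
Proof. by move=> AB [D DCs BD]; exists D => //; apply: subset_trans BD. Qed.

End Targets.

Lemma notin_sub (T : finType) (P : {set {set T}}) (C a : {set T}) : partition P setT -> C \in P ->
  a \subset C -> a != set0 -> a \notin P :\ C.
Proof.
move=> Pp CP aC a0; rewrite !inE negb_and negbK.
case aP: (a \in P); last by rewrite orbT.
apply/orP; left; apply/eqP; apply: (triv_meet (part_triv Pp)) => //.
by have -> : a :&: C = a by apply/setIidPl.
Qed.

Lemma split_part (T : finType) (P : {set {set T}}) (C a b : {set T}) : partition P setT -> C \in P ->
  a :|: b = C -> a :&: b = set0 -> a != set0 -> b != set0 ->
  partition ((P :\ C) :|: [set a; b]) setT.
Proof.
move=> Pp CP abC ab0 a0 b0; have tP := part_triv Pp.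
have Da : forall M, M \in P :\ C -> M :&: a = set0.
  move=> M; rewrite !inE => /andP [MC MP]; apply/eqP; rewrite -subset0.
  rewrite -(triv0 tP MP CP MC); apply: setIS; rewrite -abC; exact: subsetUl.
have Db : forall M, M \in P :\ C -> M :&: b = set0.
  move=> M; rewrite !inE => /andP [MC MP]; apply/eqP; rewrite -subset0.
  rewrite -(triv0 tP MP CP MC); apply: setIS; rewrite -abC; exact: subsetUr.
apply/and3P; split.
- apply/eqP/setP => x; rewrite inE; apply/bigcupP.
  have [M MP xM] := part_cover Pp x.
  case: (eqVneq M C) => [eM|MC].
    move: xM; rewrite eM -abC inE => /orP[xa|xb].
      by exists a; rewrite // !inE eqxx orbT.
    by exists b; rewrite // !inE eqxx !orbT.
  by exists M; rewrite // !inE MC MP.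
- apply/trivIsetP => A B.
  move=> /setUP[HA|/set2P[->|->]] /setUP[HB|/set2P[->|->]] AB; rewrite -setI_eq0.
  + move: HA HB; rewrite !inE => /andP [_ AP] /andP [_ BP]; by rewrite (triv0 tP AP BP).
  + by rewrite Da.
  + by rewrite Db.
  + by rewrite setIC Da.
  + by rewrite eqxx in AB.
  + by rewrite ab0.
  + by rewrite setIC Db.
  + by rewrite setIC ab0.
  + by rewrite eqxx in AB.
- apply/negP => /setUP [|/set2P [e|e]].
  + by rewrite !inE; case/and3P: Pp => _ _ /negbTE ->; rewrite andbF.
  + by move: a0; rewrite -e eqxx.
  + by move: b0; rewrite -e eqxx.
Qed.

Lemma split_sum (T : finType) (P : {set {set T}}) (C a b : {set T}) (F : {set T} -> nat) :
  a \notin P :\ C -> b \notin P :\ C -> a != b ->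
  (\sum_(X in (P :\ C) :|: [set a; b]) F X = F a + (F b + \sum_(X in P :\ C) F X))%N.
Proof.
move=> aP bP ab.
have -> : (P :\ C) :|: [set a; b] = a |: (b |: (P :\ C)).
  by apply/setP => x; rewrite !in_setU !in_set1 orbC orbA.
rewrite big_setU1 ?big_setU1 //.
by rewrite in_setU1 negb_or ab.
Qed.

Section NatErr.
Variables (T : finType) (Cs : {set {set T}}) (gamma : {set {set T}} -> nat).
Hypothesis Cspart : clustering Cs.
Hypothesis Hnat : natural_error Cs gamma.

Definition Qf (X : {set T}) := (2 * tcount Cs X - 1)%N.
Definition Q (P : {set {set T}}) := (\sum_(X in P) Qf X)%N.

Lemma Q_ge P : partition P setT -> (#|P| <= Q P)%N.
Proof.
move=> Pp; rewrite -sum1_card; apply: leq_sum => X XP.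
have := tcount_pos Cspart (part_n0 Pp XP); rewrite /Qf; lia.
Qed.

Lemma tcount_diff (C D : {set T}) : D \in Cs -> (tcount Cs C <= (tcount Cs (C :\: D)).+1)%N.
Proof.
move=> DCs; apply: (@leq_trans #|D |: [set D' in Cs | D' :&: (C :\: D) != set0]|).
  apply: subset_leq_card; apply/subsetP => D'; rewrite !inE => /andP [D'Cs D'C].
  case: (eqVneq D' D) => //= D'D; rewrite D'Cs /=.
  case/meetP: D'C => x xD' xC; apply/meetP; exists x => //; rewrite inE xC andbT.
  apply/negP => xD; move/negP: D'D; apply; apply/eqP; apply: (Cs_meet Cspart) => //.
  by apply/meetP; exists x.
by rewrite cardsU1; case: (D \notin _).
Qed.

Lemma nat_bound n : forall P, (gamma P < n)%N -> clustering P ->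
  (Q P <= gamma P + #|Cs|)%N.
Proof.
elim: n => [//|n IH] P Hg Pc.
case: (boolP [exists C in P, 1 < tcount Cs C]%N) => [/existsP [C /andP [CP Ct]]|Hall].
  have [D] : exists D, D \in [set D in Cs | D :&: C != set0].
    by apply/set0Pn; rewrite -card_gt0; apply: ltnW.
  rewrite inE => /andP [DCs DC].
  have nCD : ~~ (C \subset D).
    by apply/negP => CD; apply: (impure_not_pure Cspart Ct); exists D.
  have CD0 : C :&: D != set0 by rewrite setIC.
  have Hg' := (proj1 Hnat) P C D Pc CP DCs CD0 nCD.
  have b0 : C :\: D != set0 by rewrite setD_eq0.
  have ab0 : (C :&: D) :&: (C :\: D) = set0.
    by apply/setP => x; rewrite !inE; case: (x \in D); rewrite ?andbF.
  have P'c := split_part Pc CP (setID C D) ab0 CD0 b0.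
  have := IH _ (leq_trans Hg' (ltnSE Hg)) P'c.
  have eQ : Q P = (Qf C + \sum_(X in P :\ C) Qf X)%N by rewrite /Q (big_setD1 C CP).
  rewrite eQ /Q (split_sum _ (notin_sub Pc CP (subsetIl _ _) CD0)
     (notin_sub Pc CP (subsetDl _ _) b0)); last first.
    by apply/negP => /eqP e; move: ab0; rewrite -e setIid => H; rewrite H eqxx in CD0.
  have := tcount_pos Cspart CD0; have := tcount_diff C DCs.
  rewrite /Qf; move: Ct Hg'; set S0 := \sum_(X in P :\ C) _; lia.
have Hp : forall C, C \in P -> (tcount Cs C <= 1)%N.
  move=> C CP; rewrite leqNgt; apply: contraNN Hall => H.
  by apply/existsP; exists C; rewrite CP H.
have QP : (Q P <= #|P|)%N.
  rewrite -sum1_card; apply: leq_sum => X XP; have := Hp X XP; rewrite /Qf; lia.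
case: (leqP #|P| #|Cs|) => Hk; first lia.
case: (boolP [exists C1 in P, exists C2 in P, (C1 != C2) &&
   [exists D in Cs, (C1 \subset D) && (C2 \subset D)]]).
  move=> /existsP [C1 /andP [C1P /existsP [C2 /andP [C2P /andP [C12 /existsP [D /and3P [DCs C1D C2D]]]]]]].
  have Hg' := (proj2 Hnat) P C1 C2 Pc C1P C2P C12 (ex_intro2 _ _ D DCs (introT andP (conj C1D C2D))).
  have e : (P :\ C1 :\ C2) :|: [set C1 :|: C2] = merge_nodes P C1 C2.
    by rewrite /merge_nodes setUC.
  have P'c : clustering ((P :\ C1 :\ C2) :|: [set C1 :|: C2]).
    by rewrite e; apply: merge_part.
  have := IH _ (leq_trans Hg' (ltnSE Hg)) P'c.
  have := Q_ge P'c.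
  have -> : #|(P :\ C1 :\ C2) :|: [set C1 :|: C2]| = #|P|.-1.
    have h1 : #|P| = (#|P :\ C1 :\ C2|).+2.
      by rewrite (cardsD1 C1 P) (cardsD1 C2 (P :\ C1)) C1P in_setD1 C2P andbT eq_sym C12.
    have h2 : C1 :|: C2 \notin P :\ C1 :\ C2.
      rewrite !inE !negb_and !negbK; case UP: (C1 :|: C2 \in P); rewrite ?orbT //.
      apply/orP; right; apply/orP; left; apply/eqP; apply: (triv_meet (part_triv Pc)) => //.
      have := part_n0 Pc C1P; case/set0Pn => x xC1; apply/meetP; exists x => //.
      by rewrite inE xC1.
    by rewrite setUC cardsU1 h2 h1.
  move: Hg' QP; lia.
move=> Hno; exfalso.
pose f (X : {set T}) := odflt set0 [pick D in Cs | X \subset D].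
have fP : forall X, X \in P -> f X \in Cs /\ X \subset f X.
  move=> X XP; rewrite /f; case: pickP => [D /andP [DCs XD] //|H].
  have [D DCs XD] := tcount_pure Cspart (part_n0 Pc XP) (Hp X XP).
  by move: (H D); rewrite DCs XD.
have finj : {in P &, injective f}.
  move=> X Y XP YP fXY; apply/eqP; apply: contraNT Hno => XY.
  apply/existsP; exists X; rewrite XP; apply/existsP; exists Y; rewrite YP XY /=.
  apply/existsP; exists (f X); have [-> XfX] := fP X XP; have [_ YfY] := fP Y YP.
  by rewrite XfX fXY YfY.
have : (#|P| <= #|Cs|)%N.
  rewrite -(card_in_imset finj); apply: subset_leq_card; apply/subsetP => D.
  by case/imsetP => X XP ->; have [] := fP X XP.
by rewrite leqNgt Hk.
Qed.

End NatErr.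

Section Process.
Variables (R : realType) (T : finType) (S : T -> T -> R) (Cs : {set {set T}}) (eta : R).
Variable s : seq ({set T} * {set T}).
Hypothesis Ssym : forall x y, S x y = S y x.
Hypothesis Cspart : clustering Cs.
Hypothesis Cstab : stable S Cs.
Hypothesis Htree : avg_linkage_tree S s.
Hypothesis eta_gt : 1 / 2 < eta.
Hypothesis eta_lt : eta < 1.

Definition lb := ln (1 / (1 - eta)).
Definition Lc := ln (#|T|%:R : R) / lb.
Definition c4 := 3 + 2 * Lc.
Definition w (C : {set T}) := 1 + ln (#|C|%:R : R) / lb.
Definition g (st : state T) (C : {set T}) :=
  (if C \in st.2 then 1 else w C) + c4 * ((tcount Cs C).-1)%:R.
Definition Phi (st : state T) := \sum_(C in st.1) g st C.
Definition Inv (st : state T) := set0 \notin st.1 /\ (forall C, C \in st.2 -> pureC Cs C).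

Lemma lb_gt0 : 0 < lb.
Proof.
rewrite /lb; apply: ln_gt0; rewrite ltr_pdivlMr ?mul1r; move: eta_gt eta_lt; try lra.

Qed.

Lemma ln_nat_ge0 m : 0 <= ln (m%:R : R).
Proof.
case: m => [|m]; first by rewrite ln0.
by apply: ln_ge0; rewrite ler1n.
Qed.

Lemma div_lb_le x y : x <= y -> x / lb <= y / lb.
Proof. by move=> xy; rewrite ler_pM2r // invr_gt0 lb_gt0. Qed.

Lemma Lc_ge0 : 0 <= Lc.
Proof. by rewrite /Lc divr_ge0 ?ln_nat_ge0 // ltW // lb_gt0. Qed.

Lemma c4_ge0 : 0 <= c4.
Proof. have := Lc_ge0; rewrite /c4; lra. Qed.

Lemma w_ge1 C : 1 <= w C.
Proof. by rewrite /w lerDl divr_ge0 ?ln_nat_ge0 // ltW // lb_gt0. Qed.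

Lemma w_le C : w C <= 1 + Lc.
Proof.
rewrite /w /Lc lerD2l; apply: div_lb_le.
case: (posnP #|C|) => [->|Cp]; first by rewrite ln0 // ln_nat_ge0.
rewrite ler_ln ?posrE ?ltr0n // ?ler_nat ?max_card //.
by apply: (leq_trans Cp); exact: max_card.
Qed.

Lemma w_shrink (A C : {set T}) : A != set0 ->
  (#|A|%:R : R) <= (1 - eta) * #|C|%:R -> w A <= w C - 1.
Proof.
move=> A0 H.
have Ap : (0 < #|A|%:R :> R) by rewrite ltr0n card_gt0.
have e0 : 0 < 1 - eta by move: eta_lt; lra.
have Cp : (0 < #|C|%:R :> R).
  rewrite ltNge; apply/negP => Cn; have : (1 - eta) * #|C|%:R <= 0.
    by rewrite mulr_ge0_le0 // ltW.
  lra.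
have lbe : lb = - ln (1 - eta) by rewrite /lb div1r lnV // posrE.
have : ln (#|A|%:R : R) <= ln (1 - eta) + ln (#|C|%:R : R).
  rewrite -lnM ?posrE // ler_ln ?posrE //; exact: mulr_gt0.
move=> /div_lb_le; rewrite mulrDl.
have -> : ln (1 - eta) / lb = -1.
  by rewrite lbe invrN mulrN divff // -oppr_eq0 -lbe lt0r_neq0 // lb_gt0.
rewrite /w; lra.
Qed.

Lemma g_ge0 st C : 0 <= g st C.
Proof.
rewrite /g addr_ge0 ?mulr_ge0 ?c4_ge0 //; case: ifP => _ //.
exact: le_trans (w_ge1 C).
Qed.

Lemma g_mono (st st' : state T) C : (C \in st.2 -> C \in st'.2) -> g st' C <= g st C.
Proof.
move=> H; rewrite /g lerD2r; case: ifPn => h1; case: ifPn => h2 //.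
  exact: w_ge1.
by move: (H h2); rewrite (negbTE h1).
Qed.

Lemma lab_le (st : state T) C : (if C \in st.2 then 1 else w C) <= w C.
Proof. by case: ifP => _ //; exact: w_ge1. Qed.


Lemma PhiE (P Pu : {set {set T}}) : Phi (P, Pu) = \sum_(C in P) g (P, Pu) C.
Proof. by []. Qed.

Lemma gE (P Pu : {set {set T}}) C :
  g (P, Pu) C = (if C \in Pu then 1 else w C) + c4 * ((tcount Cs C).-1)%:R.
Proof. by []. Qed.

Lemma key_nat (a b c : nat) : (0 < a)%N -> (0 < b)%N -> (a + b <= c)%N ->
  ((a.-1 + b.-1).+1 <= c.-1)%N.
Proof. lia. Qed.

Lemma fin_split (s1l s2l SPC ga gb gC x y z : R) :
  s1l <= SPC -> s2l <= ga + gb -> ga <= 1 + Lc + c4 * x -> gb <= 1 + Lc + c4 * y ->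
  1 + c4 * z <= gC -> c4 * x + c4 * y + c4 <= c4 * z ->
  s1l + s2l <= gC + SPC - 1.
Proof. rewrite /c4 => h1 h2 h3 h4 h5 h6. lra. Qed.

Let TAs := TA Ssym Cspart Cstab Htree.
Let TBs := TB Ssym Cspart Cstab Htree.
Let TCs := TC Ssym Cspart Cstab Htree.

Lemma split_dec (st st' : state T) C : Inv st -> allowed eta Cs st (Defs.Split C) ->
  step s eta st (Defs.Split C) st' -> Inv st' /\ Phi st' <= Phi st - 1.
Proof.
case: st => P Pu [P0 Ppure] /= [CP Cimp] [N [N1 [N2 [Nt CN Hdeep [N12s N12] ->]]]].
have Ct : (1 < tcount Cs C)%N := Cimp.
have [N1t N2t /andP[N10 N20] N1N2] := TCs N12s.
set a := C :&: N1; set b := C :&: N2.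
have CN12 : C \subset N1 :|: N2 by rewrite N12.
have deep_contra : forall M M', M \in tnodes s -> M' != set0 -> M :&: M' = set0 ->
    M :|: M' = N -> C \subset M -> False.
  move=> M M' Mt M'0 MM' MN CM.
  have := Hdeep M Mt CM; rewrite leqNgt; apply/negP/negPn.
  apply: (tdepth_lt Nt); rewrite -MN properE subsetUl /=; apply/negP => M'M.
  have [x xM'] := set0Pn _ M'0.
  have : x \in M :&: M' by rewrite inE xM' (subsetP M'M x) // inE xM' orbT.
  by rewrite MM' inE.
have a0 : a != set0.
  apply/negP => /eqP a0; apply: (deep_contra N2 N1) => //; first by rewrite setIC.
    by rewrite setUC.
  apply/subsetP => x xC; have := subsetP CN12 x xC; rewrite inE => /orP[xN1|//].
  have : x \in a by rewrite inE xC xN1.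
  by rewrite a0 inE.
have b0 : b != set0.
  apply/negP => /eqP b0; apply: (deep_contra N1 N2) => //.
  apply/subsetP => x xC; have := subsetP CN12 x xC; rewrite inE => /orP[//|xN2].
  have : x \in b by rewrite inE xC xN2.
  by rewrite b0 inE.
have CnPu : C \notin Pu.
  by apply/negP => /Ppure; apply: impure_not_pure Ct.
have sideD : forall D M M', D \in Cs -> M \in tnodes s -> M :&: M' = set0 ->
    D :&: (C :&: M) != set0 -> D :&: (C :&: M') != set0 -> M \subset D.
  move=> D M M' DCs Mt MM' DM DM'.
  case: (TAs Mt DCs) => [//|DsM|MD0].
    case/meetP: DM' => x xD; rewrite inE => /andP [_ xM'].
    have : x \in M :&: M' by rewrite inE xM' (subsetP DsM x xD).
    by rewrite MM' inE.
  case/meetP: DM => x xD; rewrite inE => /andP [_ xM].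
  have : x \in M :&: D by rewrite inE xM xD.
  by rewrite MD0 inE.
have tab : (tcount Cs a + tcount Cs b <= tcount Cs C)%N.
  rewrite /tcount -cardsUI.
  have -> : [set D in Cs | D :&: a != set0] :&: [set D in Cs | D :&: b != set0] = set0.
    apply/setP => D; rewrite !inE; apply/negP => /andP [/andP [DCs Da] /andP [_ Db]].
    have h1 := sideD D N1 N2 DCs N1t N1N2 Da Db.
    have h2 := sideD D N2 N1 DCs N2t (etrans (setIC _ _) N1N2) Db Da.
    apply: (impure_not_pure Cspart Ct); exists D => //.
    by apply: (subset_trans CN12); rewrite subUset h1 h2.
  rewrite cards0 addn0; apply: subset_leq_card; apply/subsetP => D.
  rewrite !inE => /orP [] /andP [-> /meetP [x xD]]; rewrite inE => /andP [xC _];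
    apply/meetP; by exists x.
have ta1 := tcount_pos Cspart a0; have tb1 := tcount_pos Cspart b0.
split.
  split => /=.
    rewrite in_setU negb_or; apply/andP; split.
      by rewrite !inE negb_and P0 orbT.
    by apply/negP => /set2P [e|e]; [move: a0|move: b0]; rewrite -e eqxx.
  by move=> X; rewrite !inE => /andP [_ /andP [_ XPu]]; exact: Ppure.
rewrite !PhiE.
set st1 := ((P :\ C) :|: [set a; b], (Pu :\ C) :\: [set a; b]).
have gge := g_ge0 st1.
apply: (le_trans (sum_setU_le _ _ gge)).
have s1 : \sum_(X in (P :\ C) :\: [set a; b]) g st1 X <= \sum_(X in P :\ C) g (P, Pu) X.
  apply: le_trans (sum_mono (subsetDl _ _) (g_ge0 (P, Pu))).
  apply: ler_sum => X; rewrite !inE negb_or => /andP [/andP [Xa Xb] /andP [XC XP]].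
  apply: g_mono => /= XPu; by rewrite !inE negb_or Xa Xb XC XPu.
have s2 := sum_pair_le a b gge.
have ga : forall Y, g st1 Y <= (1 + Lc) + c4 * ((tcount Cs Y).-1)%:R.
  by move=> Y; rewrite /g lerD2r; apply: le_trans (lab_le _ _) (w_le _).
have gC : 1 + c4 * ((tcount Cs C).-1)%:R <= g (P, Pu) C.
  by rewrite gE (negbTE CnPu) lerD2r w_ge1.
rewrite (big_setD1 C CP).
have key : (((tcount Cs a).-1 + (tcount Cs b).-1).+1 <= (tcount Cs C).-1)%N.
  exact: key_nat.
have key' : ((tcount Cs a).-1)%:R + ((tcount Cs b).-1)%:R + 1 <= ((tcount Cs C).-1)%:R :> R.
  by rewrite -natrD natr1 ler_nat.
have key2 := ler_wpM2l c4_ge0 key'.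
rewrite !mulrDr mulr1 in key2.
exact: (fin_split s1 s2 (ga a) (ga b) gC key2).
Qed.

Lemma etaE (P Pu : {set {set T}}) C : eta_of eta (P, Pu) C = if C \in Pu then 1 else eta.
Proof. by []. Qed.

Lemma card_pos (C : {set T}) : C != set0 -> (0 < #|C|%:R :> R).
Proof. by move=> C0; rewrite ltr0n card_gt0. Qed.

Lemma two_halves (a b c : R) : 0 < c -> eta * c <= a -> eta * c <= b -> c < a + b.
Proof.
move=> c0 ha hb; have e : 0 < 2 * eta - 1 by move: eta_gt; lra.
have := mulr_gt0 e c0; rewrite mulrBl mul1r -mulrA; lra.
Qed.

Lemma eta_pos_card (C D : {set T}) e : C != set0 -> eta <= e ->
  e * #|C|%:R <= #|D|%:R :> R -> D != set0.
Proof.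
move=> C0 ee h; rewrite -card_gt0 -(ltr0n R); apply: lt_le_trans h.
apply: mulr_gt0 (card_pos C0); move: eta_gt ee; lra.
Qed.

Lemma side_bound (P Pu : {set {set T}}) (st1 : state T) (C N : {set T}) :
  eta_of eta (P, Pu) C * #|C|%:R <= #|N :&: C|%:R ->
  (if C :\: N == set0 then 0 else g st1 (C :\: N)) <= g (P, Pu) C - 1.
Proof.
move=> H; case: eqP => [_|/eqP D0].
  rewrite subr_ge0 gE; apply: ler_wpDr; first by rewrite mulr_ge0 ?c4_ge0.
  by case: ifP => _ //; exact: w_ge1.
have CPu : C \notin Pu.
  apply/negP => CPu; move: H; rewrite etaE CPu mul1r ler_nat => H.
  have e : N :&: C = C by apply/eqP; rewrite eqEcard subsetIr H.
  by move: D0; rewrite setD_eq0 -e subsetIl.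
move: H; rewrite etaE (negbTE CPu) => H.
have hc : (#|C :\: N|%:R : R) <= (1 - eta) * #|C|%:R.
  have := cardsID N C; rewrite setIC => e.
  have : (#|C|%:R : R) = #|N :&: C|%:R + #|C :\: N|%:R by rewrite -natrD e.
  move: H; rewrite mulrBl mul1r; lra.
have hw := w_shrink D0 hc.
have ht : ((tcount Cs (C :\: N)).-1)%:R <= ((tcount Cs C).-1)%:R :> R.
  rewrite ler_nat -!subn1 leq_sub2r // tcount_sub //; exact: subsetDl.
have := ler_wpM2l c4_ge0 ht.
rewrite gE (negbTE CPu) /g.
have := lab_le st1 (C :\: N).
move: hw.
set L1 := (if _ then _ else _).
set x1 := c4 * _. set x2 := c4 * _.
move=> h1 h2 h3. lra.
Qed.

Lemma nat3 (c a b u : nat) : (c < a + b)%N -> (u + 0 = a + b)%N -> (u <= c)%N -> False.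
Proof. lia. Qed.

Lemma fin_merge (SA1 SA SB ri rj gi gj gn : R) :
  SA1 <= SA -> SB <= ri + rj -> ri <= gi - 1 -> rj <= gj - 1 -> gn <= 1 ->
  SA1 + SB + gn <= gi + (gj + SA) - 1.
Proof. move=> *; lra. Qed.

Lemma merge_dec (st st' : state T) Ci Cj : Inv st -> allowed eta Cs st (Defs.Merge Ci Cj) ->
  step s eta st (Defs.Merge Ci Cj) st' -> Inv st' /\ Phi st' <= Phi st - 1.
Proof.
case: st => P Pu [P0 Ppure] [CiP CjP Cij [Cl ClCs [HCi HCj]]] [N [Nt gN Hdeep Hst']].
cbv beta iota zeta delta [fst snd] in Hst'.
cbv beta iota zeta delta [fst snd] in gN.
cbv beta iota zeta delta [fst snd] in Hdeep.
have P0' : set0 \notin P := P0.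
have Ppure' : forall C, C \in Pu -> pureC Cs C := Ppure.
have CiP' : Ci \in P := CiP.
have CjP' : Cj \in P := CjP.
clear P0 Ppure CiP CjP.
have n0 : forall C, C \in P -> C != set0.
  by move=> C CP; apply: contraNneq P0' => <-.
have Ci0 := n0 _ CiP'; have Cj0 := n0 _ CjP'.
have eta_le : forall C, eta <= eta_of eta (P, Pu) C.
  by move=> C; rewrite etaE; case: ifP => _ //; move: eta_lt; lra.
have clg : forall C, C \in P -> eta * #|C|%:R <= #|C :&: Cl|%:R ->
    eta_of eta (P, Pu) C * #|C|%:R <= #|Cl :&: C|%:R.
  move=> C CP HC; rewrite etaE; case: ifPn => CPu; last by rewrite setIC.
  have [D DCs CD] := Ppure' C CPu.
  have CCl : C :&: Cl != set0 by apply: (eta_pos_card (n0 C CP) (lexx eta) HC).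
  have DCl : D = Cl.
    apply: (Cs_meet Cspart) => //; case/meetP: CCl => x xC xCl; apply/meetP.
    by exists x => //; exact: (subsetP CD).
  rewrite mul1r ler_nat; apply: subset_leq_card; rewrite subsetI subxx andbT -DCl //.
have [gNi gNj] := gN.
have NCl : N :&: Cl != set0.
  have h : (#|Ci| < #|N :&: Ci| + #|Ci :&: Cl|)%N.
    rewrite -(ltr_nat R) natrD; apply: two_halves (card_pos Ci0) _ HCi.
    exact: le_trans (ler_wpM2r (ler0n _ _) (eta_le Ci)) gNi.
  apply/negP => /eqP e.
  have hUI := cardsUI (N :&: Ci) (Ci :&: Cl).
  have hU : (#|N :&: Ci :|: Ci :&: Cl| <= #|Ci|)%N.
    by apply: subset_leq_card; rewrite subUset subsetIr subsetIl.
  have e2 : N :&: Ci :&: (Ci :&: Cl) = set0.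
    apply/eqP; rewrite -subset0 -e; apply/subsetP => x; rewrite !inE.
    by case/andP => /andP [-> _] /andP [_ ->].
  rewrite e2 cards0 in hUI.
  exact: nat3 h hUI hU.
have NsCl : N \subset Cl.
  case: (TAs Nt ClCs) => [//|ClN|e]; last by rewrite e eqxx in NCl.
  have [e|ne] := eqVneq Cl N; first by rewrite e.
  have := Hdeep Cl (TBs ClCs) (conj (clg Ci CiP' HCi) (clg Cj CjP' HCj)).
  rewrite leqNgt (tdepth_lt Nt) // properEneq ne ClN //.
set newC := N :&: (Ci :|: Cj).
have newPure : pureC Cs newC.
  by exists Cl => //; apply: subset_trans NsCl; exact: subsetIl.
have newC0 : newC != set0.
  have := eta_pos_card Ci0 (eta_le Ci) gNi.
  case/set0Pn => x; rewrite !inE => /andP [xN xCi]; apply/set0Pn; exists x.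
  by rewrite !inE xN xCi.
have tnew : ((tcount Cs newC).-1 = 0)%N.
  by have := pure_tcount Cspart newPure; case: (tcount Cs newC) => [|[]].
subst st'.
set A := P :\ Ci :\ Cj.
set B := [set Ci :\: N; Cj :\: N] :\ set0.
set P1 := A :|: B :|: [set newC].
set Pu1 := P1 :&: _.
split.
  split => /=.
    rewrite /P1 !in_setU !negb_or; apply/andP; split; [apply/andP; split|].
    - by rewrite /A !in_setD1 (negbTE P0') !andbF.
    - by rewrite /B !inE eqxx.
    - by rewrite in_set1 eq_sym.
  move=> X; rewrite in_setI => /andP [_]; rewrite !in_setU => /orP [/orP [/orP [XA|XI]|XJ]|XN].
  - by apply: Ppure'; move: XA; rewrite !inE => /and3P [].
  - move: XI; case: ifP => CiPu; last by rewrite inE.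
    move/set1P => ->; apply: sub_pure (Ppure' _ CiPu); exact: subsetDl.
  - move: XJ; case: ifP => CjPu; last by rewrite inE.
    move/set1P => ->; apply: sub_pure (Ppure' _ CjPu); exact: subsetDl.
  - by move/set1P: XN => ->.
rewrite !PhiE.
have gge := g_ge0 (P1, Pu1).
have h1 := sum_setU_le (A :|: B) [set newC] gge.
have h2 := sum_mono (subsetDl (A :|: B) [set newC]) gge.
have h3 := sum_setU_le2 A B gge.
rewrite big_set1 in h1.
have hA : \sum_(X in A) g (P1, Pu1) X <= \sum_(X in A) g (P, Pu) X.
  apply: ler_sum => X XA; apply: g_mono => /= XPu.
  have XA' : X \in Pu :\ Ci :\ Cj.
    by move: XA; rewrite /A !in_setD1 XPu => /and3P [-> -> _].
  by rewrite /Pu1 in_setI /P1 !in_setU XA XA'.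
have hB := sum_pairD0_le (Ci :\: N) (Cj :\: N) gge.
have hi := side_bound (P1, Pu1) gNi.
have hj := side_bound (P1, Pu1) gNj.
have nPu : newC \in Pu1.
  by rewrite /Pu1 in_setI /P1 !in_setU !in_set1 eqxx !orbT.
have hn : g (P1, Pu1) newC <= 1.
  by rewrite gE nPu tnew mulr0 addr0.
have H := fin_merge hA hB hi hj hn.
rewrite (big_setD1 Ci CiP') (big_setD1 Cj (_ : Cj \in P :\ Ci)); last first.
  by rewrite !inE eq_sym Cij CjP'.
apply: (le_trans h1); apply: le_trans H; rewrite lerD2r.
exact: le_trans h2 h3.
Qed.

Lemma Phi_ge0 st : 0 <= Phi st.
Proof. by apply: sumr_ge0 => C _; exact: g_ge0. Qed.

Lemma step_dec (st st' : state T) r : Inv st -> allowed eta Cs st r ->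
  step s eta st r st' -> Inv st' /\ Phi st' <= Phi st - 1.
Proof. by case: r => [C|Ci Cj]; [apply: split_dec | apply: merge_dec]. Qed.

Lemma size_step (n : nat) (a b : R) : n%:R <= a -> a <= b - 1 -> (n.+1)%:R <= b.
Proof. by move=> h1 h2; rewrite -natr1; lra. Qed.

Lemma run_bound rs : forall st, Inv st -> valid_run s eta Cs st rs -> (size rs)%:R <= Phi st.
Proof.
elim: rs => [|[r st'] rs IH] st Hinv.
  by move=> _; exact: Phi_ge0.
move=> [_ Hal Hst Hrun].
have [Hinv' Hdec] := step_dec Hinv Hal Hst.
exact: size_step (IH st' Hinv' Hrun) Hdec.
Qed.

Lemma init_ineq (L u : R) : 0 <= L -> 1 <= u ->
  (1 + L) + (3 + 2 * L) * (u - 1) <= 3 * (1 + L) * (2 * u - 1).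
Proof.
move=> hL hu; have hv : 0 <= u - 1 by lra.
have := mulr_ge0 hL hv; lra.
Qed.

Lemma init_bound (P0 : {set {set T}}) : clustering P0 ->
  Phi (P0, set0) <= 3 * (1 + Lc) * (Q Cs P0)%:R.
Proof.
move=> P0c; rewrite PhiE /Q natr_sum mulr_sumr; apply: ler_sum => X XP.
have X0 := part_n0 P0c XP.
have t1 := tcount_pos Cspart X0.
rewrite gE inE /Qf.
have e1 : ((tcount Cs X).-1)%:R = (tcount Cs X)%:R - 1 :> R.
  by rewrite -subn1 natrB.
have e2 : ((2 * tcount Cs X - 1)%N)%:R = 2 * (tcount Cs X)%:R - 1 :> R.
  by rewrite natrB ?natrM //; move: t1; lia.
rewrite e1 e2.
have hu : 1 <= (tcount Cs X)%:R :> R by rewrite ler1n.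
apply: le_trans (init_ineq Lc_ge0 hu).
by rewrite /c4 lerD2r w_le.
Qed.

Lemma final_bound (P0 : {set {set T}}) rs (gamma : {set {set T}} -> nat) :
  natural_error Cs gamma -> clustering P0 -> valid_run s eta Cs (P0, set0) rs ->
  (size rs)%:R <= 3%:R * (gamma P0 + #|Cs|)%:R * (1 + Lc).
Proof.
move=> Hnat P0c Hrun.
have Inv0 : Inv (P0, set0).
  split => /= [|C]; last by rewrite inE.
  by case/and3P: P0c.
have h1 := run_bound Inv0 Hrun.
have h2 := init_bound P0c.
have h3 : (Q Cs P0 <= gamma P0 + #|Cs|)%N.
  exact: (nat_bound Cspart Hnat (ltnSn (gamma P0)) P0c).
have h4 : (Q Cs P0)%:R <= (gamma P0 + #|Cs|)%:R :> R by rewrite ler_nat.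
have hL : 0 <= 3 * (1 + Lc) by have := Lc_ge0; lra.
apply: (le_trans h1); apply: (le_trans h2).
apply: (le_trans (ler_wpM2l hL h4)).
by rewrite mulrAC.
Qed.

End Process.

Theorem corollary14 :
  exists c : nat,
  forall (R : realType) (T : finType) (S : T -> T -> R)
         (Cs : {set {set T}}) (eta : R) (gamma : {set {set T}} -> nat)
         (P0 : {set {set T}}) (s : seq ({set T} * {set T}))
         (rs : seq (request T * state T)),
    (forall x y, S x y = S y x) ->
    clustering Cs -> stable S Cs ->
    1 / 2 < eta -> eta < 1 ->
    natural_error Cs gamma ->
    clustering P0 ->
    avg_linkage_tree S s ->
    valid_run s eta Cs (P0, set0) rs ->
    (size rs)%:R <= c%:R * (gamma P0 + #|Cs|)%:R
                    * (1 + ln (#|T|%:R : R) / ln (1 / (1 - eta))).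
Proof.
exists 3 => R T S Cs eta gamma P0 s rs Ssym Cspart Cstab eta_gt eta_lt Hnat P0c Htree Hrun.
exact: (final_bound Ssym Cspart Cstab Htree eta_gt eta_lt Hnat P0c Hrun).
Qed.
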